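(* Let $G=(V,E)$ be a connected undirected graph on $n$ nodes with Laplacian $L$, let $\kappa_1,\dots,\kappa_n>0$, and let $D_\kappa=\mathrm{diag}(\kappa_1,\dots,\kappa_n)$. For $S\subseteq V$ let $D_S$ be the diagonal $0/1$ matrix with $(D_S)_{ii}=1$ iff $i\in S$, and set $Q_S=L+D_\kappa D_S$ (write $Q_v$ for $Q_{\{v\}}$). Define $f:2^V\to\mathbb{R}$ by $f(\emptyset)=0$ and $f(S)=C-\mathrm{tr}(Q_S^{-1})$ for $S\neq\emptyset$, where $C=2\max_{v\in V}\mathrm{tr}(Q_v^{-1})$. Then $f$ is submodular, i.e., for all $A,B\subseteq V$, $f(A)+f(B)\ge f(A\cup B)+f(A\cap B)$.
   Context: For nonempty $S$, the matrix $Q_S$ is positive definite, so $Q_S^{-1}$ exists. *)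

(* Defs.v *)
From HB Require Import structures.
From mathcomp Require Import all_boot all_order all_algebra.
Set Implicit Arguments. Unset Strict Implicit. Unset Printing Implicit Defensive.
Import Order.TTheory GRing.Theory Num.Theory.
Local Open Scope ring_scope.

Definition simple_graph n (e : rel 'I_n) : Prop :=
  symmetric e /\ irreflexive e.

Definition connected_graph n (e : rel 'I_n) : Prop :=
  forall i j : 'I_n, connect e i j.

Definition degree n (e : rel 'I_n) (i : 'I_n) : nat := #|[set j | e i j]|.

Definition laplacian (R : pzRingType) n (e : rel 'I_n) : 'M[R]_n :=
  \matrix_(i, j) (if i == j then (degree e i)%:R else - (e i j)%:R).

Definition diag_kappa (R : pzRingType) n (kappa : 'I_n -> R) : 'M[R]_n :=
  diag_mx (\row_i kappa i).

Definition diag_set (R : pzRingType) n (S : {set 'I_n}) : 'M[R]_n :=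
  diag_mx (\row_i (i \in S)%:R).

Definition QS (R : pzRingType) n (e : rel 'I_n) (kappa : 'I_n -> R)
  (S : {set 'I_n}) : 'M[R]_n :=
  laplacian R e + diag_kappa kappa *m diag_set R S.

(* C = 2 max_v tr(Q_v^{-1}); the max over the (finite) vertex set, with
   0 as neutral element (all traces are positive, and for n = 0 V is empty). *)
Definition Cconst (R : realFieldType) n (e : rel 'I_n) (kappa : 'I_n -> R) : R :=
  2 * \big[Num.max/0]_(v < n) \tr (invmx (QS e kappa [set v])).

Definition fobj (R : realFieldType) n (e : rel 'I_n) (kappa : 'I_n -> R)
  (S : {set 'I_n}) : R :=
  if S == set0 then 0
  else Cconst e kappa - \tr (invmx (QS e kappa S)).

(* Main.v *)
Require Import Defs.
From HB Require Import structures.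
From mathcomp Require Import all_boot all_order all_algebra.
From mathcomp Require Import lra.
Import Order.TTheory GRing.Theory Num.Theory.
Local Open Scope ring_scope.
Set Implicit Arguments. Unset Strict Implicit. Unset Printing Implicit Defensive.

Section S.
Variables (R : realFieldType) (n : nat) (e : rel 'I_n) (kappa : 'I_n -> R).

Definition dk (U : {set 'I_n}) : 'M[R]_n :=
  diag_mx (\row_i (kappa i * (i \in U)%:R)).

Lemma QSE S : QS e kappa S = laplacian R e + dk S.
Proof.
rewrite /QS /diag_kappa /diag_set mul_diag_mx; congr (_ + _).
apply/matrixP => i j; rewrite !mxE; case: (i \in S); case: (i == j); by rewrite ?mulr0 ?mulr1 ?mulr0n ?mulr1n.
Qed.

Lemma QS_split (S T : {set _}) : S \subset T -> QS e kappa T = QS e kappa S + dk (T :\: S).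
Proof.
move=> sub; rewrite !QSE -addrA; congr (_ + _).
apply/matrixP => i j; rewrite !mxE -mulrnDl -mulrDr -natrD inE.
case: (boolP (i \in S)) => hS; last by rewrite add0n.
by rewrite (subsetP sub i hS).
Qed.

Lemma uQ_eq (S : {set _}) (u : 'rV[R]_n) j : symmetric e -> irreflexive e ->
  (u *m QS e kappa S) 0 j =
  \sum_i (e i j)%:R * (u 0 j - u 0 i) + kappa j * (j \in S)%:R * u 0 j.
Proof.
move=> sym irr.
rewrite QSE mulmxDr mxE [X in _ + X]mxE; congr (_ + _); last first.
  rewrite (bigD1 j) //= big1 ?addr0; last first.
    by move=> i /negbTE hij; rewrite mxE mxE hij mulr0n mulr0.
  by rewrite !mxE eqxx mulr1n mulrC.
rewrite mxE.
apply: (@eq_trans _ _ (u 0 j * (degree e j)%:R - \sum_i (e i j)%:R * u 0 i)); last first.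
  rewrite /degree.
  have -> : (#|[set i | e j i]|)%:R = \sum_i ((e i j)%:R : R).
    rewrite -sum1_card natr_sum big_mkcond /=; apply: eq_bigr => i _.
    by rewrite inE sym; case: (e i j).
  rewrite mulr_sumr -sumrB; apply: eq_bigr => i _; rewrite mulrBr mulrC.
  done.
rewrite (bigD1 j) //= mxE eqxx.
rewrite [X in _ - X](bigD1 j) //= irr mul0r add0r.
congr (_ + _); rewrite -sumrN; apply: eq_bigr => i /negbTE hij.
by rewrite mxE hij mulrN mulrC.
Qed.

Lemma minprinc (S : {set 'I_n}) (u : 'rV[R]_n) :
  symmetric e -> irreflexive e -> connected_graph e ->
  (forall i, 0 < kappa i) -> S != set0 ->
  (forall j, 0 <= (u *m QS e kappa S) 0 j) -> forall j, 0 <= u 0 j.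
Proof.
move=> sym irr conn kpos hS hQ j0; rewrite leNgt; apply/negP => hneg.
case: (@Order.TotalTheory.arg_minP _ _ _ j0 predT (fun i => u 0 i) isT) => k _ hk.
set m := u 0 k.
have mneg : m < 0 by apply: le_lt_trans (hk j0 isT) hneg.
have step : forall x, u 0 x = m -> x \notin S /\ forall y, e y x -> u 0 y = m.
  move=> x hx; have := hQ x; rewrite uQ_eq // hx => hsum.
  have terms : forall y, (e y x)%:R * (m - u 0 y) <= 0 :> R.
    move=> y; apply: mulr_ge0_le0; first by rewrite ler0n.
    by rewrite subr_le0; apply: hk.
  have sle : \sum_i (e i x)%:R * (m - u 0 i) <= 0 :> R by apply: sumr_le0.
  split.
    apply/negP => xS; move: hsum; rewrite xS mulr1.
    have : kappa x * m < 0 by rewrite pmulr_rlt0.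
    move=> h1 h2; lra.
  move=> y eyx; apply/eqP; rewrite eq_le (hk y isT) andbT leNgt; apply/negP => hy.
  move: hsum; rewrite (bigD1 y) //= eyx mul1r.
  have h1 : m - u 0 y < 0 by rewrite subr_lt0.
  have h2 : \sum_(i | i != y) (e i x)%:R * (m - u 0 i) <= 0 :> R by apply: sumr_le0.
  have h3 : kappa x * (x \in S)%:R * m <= 0.
    by apply: mulr_ge0_le0 (ltW mneg); apply: mulr_ge0; [apply: ltW | rewrite ler0n].
  move=> h4; lra.
have prop : forall x, connect e k x -> u 0 x = m.
  move=> x /connectP [p hp ->].
  have : u 0 k = m by [].
  move: hp; move: (k) => k0 hp hk0.
  elim: p k0 hp hk0 => [|y p IH] k0 /= hp hk0 //; case/andP: hp => eky hp.
  apply: (IH y hp); apply: (proj2 (step k0 hk0)); by rewrite sym.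
case/set0Pn: hS => s sS.
by have := proj1 (step s (prop s (conn k s))); rewrite sS.
Qed.

Hypotheses (sym : symmetric e) (irr : irreflexive e) (conn : connected_graph e)
  (kpos : forall i, 0 < kappa i).

Lemma QS_unit (S : {set 'I_n}) : S != set0 -> QS e kappa S \in unitmx.
Proof.
move=> hS; rewrite unitmxE unitfE; apply/negP => /det0P [v vn0 hv].
case/negP: vn0; apply/eqP/rowP => j; rewrite mxE; apply/eqP; rewrite eq_le.
have h1 : 0 <= v 0 j.
  by apply: (@minprinc S v sym irr conn kpos hS) => k; rewrite hv mxE.
have h2 : 0 <= (- v) 0 j.
  by apply: (@minprinc S (- v) sym irr conn kpos hS) => k; rewrite mulNmx hv oppr0 mxE.
by rewrite mxE oppr_ge0 in h2; rewrite h1 h2.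
Qed.

Definition nnm m p (M : 'M[R]_(m,p)) := forall i j, 0 <= M i j.

Lemma inv_nn (S : {set 'I_n}) : S != set0 -> nnm (invmx (QS e kappa S)).
Proof.
move=> hS i j.
have := @minprinc S (row i (invmx (QS e kappa S))) sym irr conn kpos hS.
rewrite -row_mul mulVmx ?QS_unit // => h.
have := h _ j; rewrite mxE; apply => k; by rewrite !mxE ler0n.
Qed.

Lemma nn_mul m p q (A : 'M[R]_(m,p)) (B : 'M[R]_(p,q)) : nnm A -> nnm B -> nnm (A *m B).
Proof.
move=> hA hB i j; rewrite mxE; apply: sumr_ge0 => k _; exact: mulr_ge0.
Qed.

Lemma nn_add m p (A B : 'M[R]_(m,p)) : nnm A -> nnm B -> nnm (A + B).
Proof. by move=> hA hB i j; rewrite mxE; apply: addr_ge0. Qed.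

Lemma nn_dk U : nnm (dk U).
Proof.
move=> i j; rewrite !mxE; apply: mulrn_wge0; apply: mulr_ge0; [exact: ltW | exact: ler0n].
Qed.

Lemma tr_nn (A : 'M[R]_n) : nnm A -> 0 <= \tr A.
Proof. by move=> hA; rewrite /mxtrace; apply: sumr_ge0 => i _. Qed.

Lemma tr_inv_ge0 (S : {set 'I_n}) : S != set0 -> 0 <= \tr (invmx (QS e kappa S)).
Proof. by move=> hS; apply: tr_nn; apply: inv_nn. Qed.

End S.

Lemma inv_diff (F : fieldType) m (X Z a : 'M[F]_m) : X \in unitmx -> Z \in unitmx ->
  Z = X + a -> invmx X - invmx Z = invmx X *m a *m invmx Z.
Proof.
move=> uX uZ hZ.
have -> : a = Z - X by rewrite hZ addrC addKr.
by rewrite mulmxBr mulmxBl mulVmx // mul1mx -mulmxA mulmxV // mulmx1.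
Qed.

Lemma key (F : fieldType) m (X Y Z W a b : 'M[F]_m) :
  X \in unitmx -> Y \in unitmx -> Z \in unitmx -> W \in unitmx ->
  Z = X + a -> Y = X + b -> W = Z + b -> W = Y + a ->
  invmx X - invmx Z - (invmx Y - invmx W) =
  invmx X *m b *m invmx Y *m a *m invmx Z + invmx Y *m a *m (invmx Z *m b *m invmx W).
Proof.
move=> uX uY uZ uW hZ hY hWZ hWY.
rewrite (inv_diff uX uZ hZ) (inv_diff uY uW hWY) -(inv_diff uX uY hY) -(inv_diff uZ uW hWZ).
by rewrite !mulmxBl mulmxBr addrA subrK.
Qed.

Lemma le_bigmax0 (R : realFieldType) n (F : 'I_n -> R) v :
  F v <= \big[Num.max/0]_(i < n) F i.
Proof.
have : v \in index_enum 'I_n by apply: mem_index_enum.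
elim: (index_enum 'I_n) => [|x s IH] //; rewrite inE big_cons.
case/orP => [/eqP -> | /IH h]; rewrite le_max ?lexx //.
by rewrite h orbT.
Qed.

Lemma tr_mono (R : realFieldType) n (e : rel 'I_n) (kappa : 'I_n -> R) :
  symmetric e -> irreflexive e -> connected_graph e -> (forall i, 0 < kappa i) ->
  forall S T : {set 'I_n}, S != set0 -> S \subset T ->
  \tr (invmx (QS e kappa T)) <= \tr (invmx (QS e kappa S)).
Proof.
move=> sym irr conn kpos S T hS sub.
have hT : T != set0.
  apply: contraNneq hS => T0; apply/eqP; apply/setP => i; rewrite inE.
  by apply/negP => iS; have := subsetP sub i iS; rewrite T0 inE.
have := inv_diff (QS_unit sym irr conn kpos hS) (QS_unit sym irr conn kpos hT)
  (QS_split e kappa sub).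
move=> h; rewrite -subr_ge0 -raddfB /= h; apply: tr_nn.
apply: nn_mul; [apply: nn_mul|]; [exact: inv_nn | exact: nn_dk | exact: inv_nn].
Qed.

Unset Implicit Arguments.
Set Strict Implicit.

Theorem theorem2 (R : realFieldType) (n : nat) (e : rel 'I_n)
  (kappa : 'I_n -> R) :
  simple_graph e -> connected_graph e ->
  (forall i, 0 < kappa i) ->
  forall A B : {set 'I_n},
    fobj e kappa (A :|: B) + fobj e kappa (A :&: B)
    <= fobj e kappa A + fobj e kappa B.
Proof.
move=> [sym irr] conn kpos A B.
have f0 : fobj e kappa set0 = 0 by rewrite /fobj eqxx.
have [A0|hA] := eqVneq A set0.
  by rewrite A0 set0U set0I f0 addr0 ?add0r lexx.
have [B0|hB] := eqVneq B set0.
  by rewrite B0 setU0 setI0 f0 addr0 ?add0r lexx.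
have hU : A :|: B != set0.
  apply: contraNneq hA => U0; apply/eqP; apply/setP => i; rewrite inE.
  apply/negP => iA; have : i \in A :|: B by rewrite inE iA.
  by rewrite U0 inE.
rewrite /fobj (negbTE hA) (negbTE hB) (negbTE hU).
set C := Cconst e kappa.
have [I0|hI] := eqVneq (A :&: B) set0.

  case/set0Pn: hA => a aA; case/set0Pn: hB => b bB.
  have ha : \tr (invmx (QS e kappa A)) <= \tr (invmx (QS e kappa [set a])).
    by apply: tr_mono => //; [apply/set0Pn; exists a; rewrite inE | rewrite sub1set].
  have hb : \tr (invmx (QS e kappa B)) <= \tr (invmx (QS e kappa [set b])).
    by apply: tr_mono => //; [apply/set0Pn; exists b; rewrite inE | rewrite sub1set].
  have ma := le_bigmax0 (fun v => \tr (invmx (QS e kappa [set v]))) a.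
  have mb := le_bigmax0 (fun v => \tr (invmx (QS e kappa [set v]))) b.
  have w := tr_inv_ge0 sym irr conn kpos hU.
  rewrite /C /Cconst; move: ha hb ma mb w => /=.
  set M := \big[Num.max/0]_(v < n) _.
  move=> *; lra.

have u := QS_unit sym irr conn kpos.
have eq1 : (A :|: B) :\: A = B :\: (A :&: B).
  by apply/setP => i; rewrite !inE; case: (i \in A); case: (i \in B).
have eq2 : (A :|: B) :\: B = A :\: (A :&: B).
  by apply/setP => i; rewrite !inE; case: (i \in A); case: (i \in B).
have hZ := QS_split e kappa (subsetIl A B).
have hY := QS_split e kappa (subsetIr A B).
have hWZ := QS_split e kappa (subsetUl A B); rewrite eq1 in hWZ.
have hWY := QS_split e kappa (subsetUr A B); rewrite eq2 in hWY.
have K := key (u _ hI) (u _ hB) (u _ hA) (u _ hU) hZ hY hWZ hWY.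
have : 0 <= \tr (invmx (QS e kappa (A :&: B)) - invmx (QS e kappa A)
          - (invmx (QS e kappa B) - invmx (QS e kappa (A :|: B)))).
  rewrite K; apply: tr_nn; apply: nn_add.
    apply: nn_mul; [apply: nn_mul|]; [apply: nn_mul|..]; [apply: nn_mul|..];
      by [exact: inv_nn | exact: nn_dk].
  apply: nn_mul; [apply: nn_mul|]; [|exact: nn_dk|];
    try (apply: nn_mul; [apply: nn_mul|]); by [exact: inv_nn | exact: nn_dk].
rewrite !raddfB /= => h; lra.
Qed.
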